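(* Let $\Lambda$ be a finite non-uniform rectangular grid. Then there exists a plane geometric graph on the set of vertices of $\Lambda$ whose maximum vertex degree is at most $3$ and whose stretch factor is at most $3\sqrt{2}$.
   Context: A finite non-uniform $m\times k$ rectangular grid $\Lambda$ has as vertices the $mk$ intersection points of $m$ horizontal lines and $k$ vertical lines, where the spacings between consecutive horizontal lines and between consecutive vertical lines are arbitrary. A geometric graph has straight-segment edges weighted by Euclidean length; its stretch factor is the smallest $t$ such that the shortest-path distance between any two vertices $u,v$ is at most $t|uv|$. A graph is plane if no two edges cross. *)

(* Defs.v *)
From mathcomp Require Import all_boot all_order all_algebra.
From mathcomp Require Import reals.
Set Implicit Arguments. Unset Strict Implicit. Unset Printing Implicit Defensive.
Import Order.TTheory GRing.Theory Num.Theory.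
Local Open Scope ring_scope.

Section Geom.
Variable R : realType.

Definition dist (a b : R * R) : R :=
  Num.sqrt ((a.1 - b.1) ^+ 2 + (a.2 - b.2) ^+ 2).

Definition on_seg (a b z : R * R) : Prop :=
  exists2 t : R, 0 <= t <= 1 &
    z = (a.1 + t * (b.1 - a.1), a.2 + t * (b.2 - a.2)).

Variables (V : finType) (pos : V -> R * R) (e : rel V).

Definition simple_graph : Prop := symmetric e /\ irreflexive e.

Definition max_degree_le (d : nat) : Prop :=
  forall v : V, (#|[set w | e v w]| <= d)%N.

Definition plane : Prop :=
  forall a b c d : V, e a b -> e c d -> [set a; b] != [set c; d] ->
    forall z, on_seg (pos a) (pos b) z -> on_seg (pos c) (pos d) z ->
      exists2 w, w \in [set a; b] :&: [set c; d] & z = pos w.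

Definition path_length (u : V) (s : seq V) : R :=
  \sum_(i < size s) dist (pos (nth u (u :: s) i)) (pos (nth u s i)).

(* stretch factor at most t: every pair u, v is joined by a path in e
   of Euclidean length at most t |uv| (hence the shortest-path distance,
   a minimum over finitely many simple paths, is at most t |uv|) *)
Definition stretch_factor_le (t : R) : Prop :=
  forall u v : V, exists s : seq V,
    [/\ path e u s, last u s = v & path_length u s <= t * dist (pos u) (pos v)].

End Geom.

(* Main.v *)
Require Import Defs.
From mathcomp Require Import all_boot all_order all_algebra.
From mathcomp Require Import reals.
From mathcomp Require Import zify ring lra.
Import Order.TTheory GRing.Theory Num.Theory.
Set Implicit Arguments. Unset Strict Implicit. Unset Printing Implicit Defensive.

Section Chain.
Variables (valid dirR : nat -> bool).
Definition sl (x : nat -> bool) t := [&& 0 < t, valid t.-1, dirR t.-1 & ~~ x t.-1].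
Definition sr (x : nat -> bool) t := [&& valid t.+1, ~~ dirR t & ~~ x t.+1].
Definition good (n : nat) (x : nat -> bool) :=
  forall t, t.+1 < n -> valid t -> (valid t.+1 -> x t || x t.+1) /\ (x t -> sl x t || sr x t).
Inductive st := SR | SA | SB | SC.
Definition status n (x : nat -> bool) :=
  if n is n'.+1 then (if ~~ valid n' then SR else if ~~ x n' then SA else if sl x n' then SB else SC) else SR.
Definition isC s := if s is SC then true else false.
Inductive rs := RR | RAC | RB.
Fixpoint rho n := if n is n'.+1 then (if ~~ valid n' then RR else
   match rho n' with RR => RAC | RAC => if dirR n'.-1 then RB else RAC | RB => RAC end) else RR.
Lemma rhoS n : rho n.+1 = if ~~ valid n then RR else
   match rho n with RR => RAC | RAC => if dirR n.-1 then RB else RAC | RB => RAC end.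
Proof. by []. Qed.
Definition mem_rs r s := match r, s with RR, SR => true | RAC, SA => true | RAC, SC => true | RB, SB => true | _,_ => false end.

Lemma rho_RR n : rho n = RR -> n = 0 \/ exists n', n = n'.+1 /\ valid n' = false.
Proof.
case: n => [|n] /=; first by left.
case vn: (valid n) => //=; last by move=> _; right; exists n.
by case: (rho n) => //; case: ifP.
Qed.

Lemma rho_nRR n : rho n.+1 <> RR -> valid n.
Proof. by rewrite /=; case: (valid n). Qed.

Lemma rho_ok n r : rho n = r -> r <> RR -> 0 < n /\ valid n.-1.
Proof. case: n => [|n] /=; first by move=> <-. case: (valid n) => //=; by move=> <-. Qed.

Lemma status_S n x s : status n x = s -> match s with SA => x n.-1 = false | SB => x n.-1 /\ sl x n.-1
  | SC => x n.-1 /\ ~~ sl x n.-1 | SR => True end.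
Proof. case: n => [|n] /=; first by move=> <-. case: (valid n) => /=; last by move=> <-.
case: (x n) => /=; last by move=> <-. by case: (sl x n) => <-. Qed.

Definition upd (x : nat -> bool) n b := fun t => if t == n then b else x t.

Lemma good_upd n x b : good n x -> good n (upd x n b).
Proof.
move=> G t tn vt; have [c s] := G t tn vt.
rewrite /upd /sl /sr.
have -> : (t == n) = false by apply/eqP; lia.
have -> : (t.+1 == n) = false by apply/eqP; lia.
have -> : (t.-1 == n) = false by apply/eqP; lia.
by split.
Qed.

Lemma inv n : forall s, mem_rs (rho n) s -> {x | good n x /\ status n x = s}.
Proof.
elim: n => [|n IH] s.
  case: s => // _; exists (fun _ => false); split => //; by move=> t.
have Hn : forall t, t.+1 < n.+1 -> t.+1 < n \/ t = n.-1 /\ 0 < n by move=> t; lia.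
case vn: (valid n); last first.
  rewrite rhoS vn; case: s => // _.
  have [x [G S]] : {x | good n x /\ status n x <> SC}.
    case E: (rho n).
    - by have := IH SR; rewrite E => /(_ erefl) [x [G S]]; exists x; rewrite S.
    - by have := IH SA; rewrite E => /(_ erefl) [x [G S]]; exists x; rewrite S.
    - by have := IH SB; rewrite E => /(_ erefl) [x [G S]]; exists x; rewrite S.
  exists x; split; last by rewrite /status vn.
  move=> t tn vt; case: (Hn t tn) => [tn'|[E n0]]; first exact: G.
  subst t.
  split; first by rewrite prednK // vn.
  move=> xt; case E: (sl x n.-1); first by [].
  move: S; case: n {IH Hn G vn} n0 vt xt E tn => // n _ /= vt xt E _.
  by rewrite vt xt E.
move=> M.
case Rn: (rho n) => [||].
-
  have Hs : {s = SA} + {s = SC} by move: M; rewrite rhoS vn Rn /=; case: s => // _; [left|right].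
  have [x [G S]] : {x | good n x /\ status n x = SR} by apply: IH; rewrite Rn.
  exists (upd x n (isC s)); split.
    move=> t tn vt; case: (Hn t tn) => [tn'|[E n0]]; first exact: (good_upd _ G).
    case: (rho_RR Rn) => [n0'|[n' [E' vn']]]; first by rewrite n0' in n0.
    by move: vt; rewrite E E' /= vn'.
  rewrite /status vn /upd eqxx /=.
  case: Hs => -> //=.
  rewrite /sl; case: (rho_RR Rn) => [->//|[n' [-> vn']]]; by rewrite /= vn'.
-
  have [n0 vn1] := rho_ok Rn (fun h => match h with erefl => I end).
  case dn: (dirR n.-1).
  + have Hs : s = SB by move: M; rewrite rhoS vn Rn dn /=; case: s => // _; auto.
    have [x [G S]] : {x | good n x /\ status n x = SA} by apply: IH; rewrite Rn.
    have xn1 : x n.-1 = false.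
      exact: (status_S S).
    exists (upd x n true); split.
      move=> t tn vt; case: (Hn t tn) => [tn'|[E _]]; first exact: (good_upd _ G).
      subst t; rewrite /upd.
      have -> : (n.-1 == n) = false by apply/eqP; lia.
      rewrite xn1 /=; split => // _; rewrite prednK // eqxx //.
    rewrite Hs /status vn /upd eqxx /= /sl n0 vn1 dn /=.
    have -> : (n.-1 == n) = false by apply/eqP; lia.
    by rewrite xn1.
  + have Hs : {s = SA} + {s = SC} by move: M; rewrite rhoS vn Rn dn /=; case: s => // _; [left|right].
    case: Hs => ->.
    * have [x [G S]] : {x | good n x /\ status n x = SC} by apply: IH; rewrite Rn.
      have xn1 : x n.-1 = true.
        by case: (status_S S).
      exists (upd x n false); split.
        move=> t tn vt; case: (Hn t tn) => [tn'|[E _]]; first exact: (good_upd _ G).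
        subst t; rewrite /upd.
        have -> : (n.-1 == n) = false by apply/eqP; lia.
        rewrite xn1 /=; split => // _; rewrite /sr prednK // eqxx vn dn //.
        by rewrite orbT.
      by rewrite /status vn /upd eqxx.
    * have [x [G S]] : {x | good n x /\ status n x = SA} by apply: IH; rewrite Rn.
      have xn1 : x n.-1 = false.
        exact: (status_S S).
      exists (upd x n true); split.
        move=> t tn vt; case: (Hn t tn) => [tn'|[E _]]; first exact: (good_upd _ G).
        subst t; rewrite /upd.
        have -> : (n.-1 == n) = false by apply/eqP; lia.
        rewrite xn1 /=; split => // _; rewrite prednK // eqxx //.
      rewrite /status vn /upd eqxx /= /sl dn !andbF //.
-
  have Hs : {s = SA} + {s = SC} by move: M; rewrite rhoS vn Rn /=; case: s => // _; [left|right].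
  have [x [G S]] : {x | good n x /\ status n x = SB} by apply: IH; rewrite Rn.
  have [n0 _] := rho_ok Rn (fun h => match h with erefl => I end).
  have [xn1 sln] : x n.-1 = true /\ sl x n.-1 by exact: (status_S S).
  exists (upd x n (isC s)); split.
    move=> t tn vt; case: (Hn t tn) => [tn'|[E _]]; first exact: (good_upd _ G).
    subst t; rewrite /upd.
    have -> : (n.-1 == n) = false by apply/eqP; lia.
    rewrite xn1 /=; split => // _.
    move: sln; rewrite /sl.
    have -> : (n.-1.-1 == n) = false by apply/eqP; lia.
    by move=> ->.
  rewrite /status vn /upd eqxx /=.
  case: Hs => -> //=.
  rewrite /sl.
  have -> : (n.-1 == n) = false by apply/eqP; lia.
  by rewrite xn1 !andbF.
Qed.

Lemma chain1D N : (forall t, valid t -> t < N) -> {x : nat -> bool |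
  forall t, valid t -> (valid t.+1 -> x t || x t.+1) /\ (x t -> sl x t || sr x t)}.
Proof.
move=> HN.
have [x [G S]] : {x | good N x /\ status N x <> SC}.
  case E: (rho N).
  - by have := @inv N SR; rewrite E => /(_ erefl) [x [G S]]; exists x; rewrite S.
  - by have := @inv N SA; rewrite E => /(_ erefl) [x [G S]]; exists x; rewrite S.
  - by have := @inv N SB; rewrite E => /(_ erefl) [x [G S]]; exists x; rewrite S.
exists x => t vt.
have tN := HN t vt.
case: (ltnP t.+1 N) => [tN'|tN']; first exact: G.
have Et : t = N.-1 by lia.
split.
  move=> vt1; have := HN _ vt1; lia.
move=> xt; case E: (sl x t); first by [].
move: S; subst t.
case: N HN G vt tN tN' xt E => //= N _ _ vN _ _ xN E.
by rewrite vN xN E.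
Qed.
End Chain.


Lemma half_odd i : (i.*2.+1)./2 = i.
Proof. by rewrite -[i.*2.+1]/(true + i.*2) half_bit_double. Qed.

Section Core.
Variables (k m : nat) (wide : nat -> nat -> bool).

Definition vs s t := if odd t then [&& t./2.+1 < k, t./2 <= s & s - t./2 < m]
                      else [&& t./2 < k, t./2 <= s & (s - t./2).+1 < m].
Definition ds s t := if odd t then ~~ wide t./2 (s - t./2).-1 else wide t./2 (s - t./2).

Lemma vsB s t : vs s t -> t < k.*2.
Proof. rewrite /vs; case: ifP => Ht /and3P [h1 _ _]; rewrite -[t in t < _]odd_double_half Ht /=; lia. Qed.

Definition Xc s := sval (@chain1D (vs s) (ds s) _ (@vsB s)).
Lemma XP s t : vs s t -> (vs s t.+1 -> Xc s t || Xc s t.+1) /\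
   (Xc s t -> sl (vs s) (ds s) (Xc s) t || sr (vs s) (ds s) (Xc s) t).
Proof. exact: (svalP (@chain1D (vs s) (ds s) _ (@vsB s)) t). Qed.

Definition DH i j := odd (i + j) && Xc (i + j) i.*2.+1.
Definition DV i j := odd (i + j) && Xc (i + j) i.*2.

Lemma vs_odd s i : vs s i.*2.+1 = [&& i.+1 < k, i <= s & s - i < m].
Proof. by rewrite /vs half_odd oddS odd_double. Qed.
Lemma vs_even s i : vs s i.*2 = [&& i < k, i <= s & (s - i).+1 < m].
Proof. by rewrite /vs odd_double doubleK. Qed.
Lemma ds_odd s i : ds s i.*2.+1 = ~~ wide i (s - i).-1.
Proof. by rewrite /ds half_odd oddS odd_double. Qed.
Lemma ds_even s i : ds s i.*2 = wide i (s - i).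
Proof. by rewrite /ds odd_double doubleK. Qed.

Lemma core_cov i j : 0 < i -> i.+1 < k -> 0 < j -> j.+1 < m -> [|| DH i j, DH i.-1 j, DV i j | DV i j.-1].
Proof.
move=> i0 ik j0 jm.
case oij: (odd (i + j)).
  have v1 : vs (i + j) i.*2 by rewrite vs_even; apply/and3P; split; lia.
  have v2 : vs (i + j) i.*2.+1 by rewrite vs_odd; apply/and3P; split; lia.
  have [c _] := XP v1; move: (c v2).
  by rewrite /DH /DV oij /= => /orP [->|->]; rewrite ?orbT.
set s := i.-1 + j.
have os : odd s.
  have Ei : i = i.-1.+1 by lia.
  by move: oij; rewrite /s {1}Ei addSn /= => /negbFE.
have Es : i + j.-1 = s by rewrite /s; lia.
have v1 : vs s i.-1.*2.+1 by rewrite vs_odd; apply/and3P; split; rewrite /s; lia.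
have v2 : vs s i.-1.*2.+2.
  have -> : i.-1.*2.+2 = i.*2 by lia.
  by rewrite vs_even; apply/and3P; split; rewrite /s; lia.
have [c _] := XP v1; move: (c v2).
have -> : i.-1.*2.+2 = i.*2 by lia.
by rewrite /DH /DV Es -/s os /= => /orP [->|->]; rewrite ?orbT.
Qed.

Lemma core_hostH i j : i.+1 < k -> j < m -> DH i j ->
  (j.+1 < m /\ wide i j /\ ~~ DV i j /\ ~~ DV i.+1 j /\ ~~ DH i j.+1) \/
  (0 < j /\ wide i j.-1 /\ ~~ DV i j.-1 /\ ~~ DV i.+1 j.-1 /\ ~~ DH i j.-1).
Proof.
move=> ik jm /andP [oij Xt].
have v : vs (i + j) i.*2.+1 by rewrite vs_odd; apply/and3P; split; lia.
have [_ sv] := XP v; move: (sv Xt) => /orP [].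
- rewrite /sl => /and4P [_ v0 d0 x0].
  left. move: v0 d0 x0; rewrite (_ : i.*2.+1.-1 = i.*2) // vs_even ds_even => /and3P [_ _ hm] d0 x0.
  have Ej : i + j - i = j by lia.
  rewrite Ej in hm d0.
  split; first by []. split; first by [].
  split; first by rewrite /DV negb_and x0 orbT.
  split; first by rewrite /DV addSn /= oij.
  by rewrite /DH addnS /= oij.
- rewrite /sr => /and3P [v1 d1 x1].
  right. rewrite (_ : i.*2.+2 = i.+1.*2) in v1 x1; last by rewrite doubleS.
  move: v1; rewrite vs_even => /and3P [_ h2 _].
  have j0 : 0 < j by lia.
  have Ej : (i + j - i).-1 = j.-1 by lia.
  move: d1; rewrite ds_odd Ej negbK => d1.
  have ojm : odd (i + j.-1) = false.
    have Ej' : j = j.-1.+1 by lia.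
    by move: oij; rewrite {1}Ej' addnS /= => /negbTE.
  split; first by []. split; first by [].
  split; first by rewrite /DV ojm.
  split; first by rewrite /DV (_ : i.+1 + j.-1 = i + j); [rewrite (negbTE x1) andbF | lia].
  by rewrite /DH ojm.
Qed.

Lemma core_hostV i j : i < k -> j.+1 < m -> DV i j ->
  (i.+1 < k /\ ~~ wide i j /\ ~~ DH i j /\ ~~ DH i j.+1 /\ ~~ DV i.+1 j) \/
  (0 < i /\ ~~ wide i.-1 j /\ ~~ DH i.-1 j /\ ~~ DH i.-1 j.+1 /\ ~~ DV i.-1 j).
Proof.
move=> ik jm /andP [oij Xt].
have v : vs (i + j) i.*2 by rewrite vs_even; apply/and3P; split; lia.
have [_ sv] := XP v; move: (sv Xt) => /orP [].
- rewrite /sl => /and4P [i0 v0 d0 x0].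
  have {}i0 : 0 < i by move: i0; rewrite double_gt0.
  right.
  have Et : i.*2.-1 = i.-1.*2.+1 by lia.
  move: v0 d0 x0; rewrite Et vs_odd ds_odd => /and3P [_ _ hm] d0 x0.
  have Ej : (i + j - i.-1).-1 = j by lia.
  rewrite Ej in d0.
  have oim : odd (i.-1 + j) = false.
    have Ei : i = i.-1.+1 by lia.
    by move: oij; rewrite {1}Ei addSn /= => /negbTE.
  split; first by []. split; first by [].
  split; first by rewrite /DH oim.
  split; first by rewrite /DH (_ : i.-1 + j.+1 = i + j); [rewrite (negbTE x0) andbF | lia].
  by rewrite /DV oim.
- rewrite /sr => /and3P [v1 d1 x1].
  left. move: v1 d1; rewrite vs_odd ds_even => /and3P [h1 _ _] d1.
  have Ej : i + j - i = j by lia.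
  rewrite Ej in d1.
  split; first by []. split; first by [].
  split; first by rewrite /DH (negbTE x1) andbF.
  split; first by rewrite /DH addnS /= oij.
  by rewrite /DV addSn /= oij.
Qed.
End Core.

Local Open Scope ring_scope.

Section PL.
Variables (R : realType) (V : finType) (pos : V -> R * R).

Lemma dist_sym (a b : R * R) : dist a b = dist b a.
Proof. by rewrite /dist -sqrrN opprB -(sqrrN (a.2 - b.2)) opprB. Qed.

Lemma dist_ge0 (a b : R * R) : 0 <= dist a b.
Proof. exact: sqrtr_ge0. Qed.

Lemma pl_nil u : path_length pos u [::] = 0.
Proof. by rewrite /path_length big_ord0. Qed.

Lemma pl_cons u x s : path_length pos u (x :: s) = dist (pos u) (pos x) + path_length pos x s.
Proof.
rewrite /path_length /= big_ord_recl /=; congr (_ + _).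
apply: eq_bigr => i _ /=.
rewrite /bump /= add0n.
rewrite (@set_nth_default _ (x :: s) x u); last by rewrite /= ltnS ltnW.
by rewrite (@set_nth_default _ s x u).
Qed.

Lemma pl_cat u s1 s2 : path_length pos u (s1 ++ s2) =
  path_length pos u s1 + path_length pos (last u s1) s2.
Proof.
elim: s1 u => [|x s1 IH] u /=; first by rewrite pl_nil add0r.
by rewrite !pl_cons IH addrA.
Qed.

Lemma pl_rcons u s x : path_length pos u (rcons s x) =
  path_length pos u s + dist (pos (last u s)) (pos x).
Proof. by rewrite -cats1 pl_cat pl_cons pl_nil addr0. Qed.

Variable e : rel V.
Hypothesis esym : symmetric e.

Lemma path_rev u s : path e u s -> exists s',
  [/\ path e (last u s) s', last (last u s) s' = u & path_length pos (last u s) s' = path_length pos u s].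
Proof.
elim: s u => [|x s IH] u /=.
  by move=> _; exists [::]; rewrite !pl_nil.
case/andP => eux px.
have [s' [p' l' L']] := IH x px.
exists (rcons s' u); split.
- by rewrite rcons_path p' l' esym.
- by rewrite last_rcons.
- by rewrite pl_rcons l' L' pl_cons addrC dist_sym.
Qed.
End PL.


Section Grid.
Variables (R : realType) (K M : nat) (xs : 'I_K.+1 -> R) (ys : 'I_M.+1 -> R).
Hypotheses (hxs : forall i j : 'I_K.+1, (i < j)%N -> xs i < xs j)
           (hys : forall i j : 'I_M.+1, (i < j)%N -> ys i < ys j).

Definition X (i : nat) := xs (inord i).
Definition Y (j : nat) := ys (inord j).

Lemma X_lt i j : (i < j)%N -> (j <= K)%N -> X i < X j.
Proof. move=> ij jK; apply: hxs; rewrite !inordK //; lia. Qed.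
Lemma Y_lt i j : (i < j)%N -> (j <= M)%N -> Y i < Y j.
Proof. move=> ij jK; apply: hys; rewrite !inordK //; lia. Qed.
Lemma X_le i j : (i <= j)%N -> (j <= K)%N -> X i <= X j.
Proof. rewrite leq_eqVlt => /orP [/eqP -> //|ij] jK; exact/ltW/X_lt. Qed.
Lemma Y_le i j : (i <= j)%N -> (j <= M)%N -> Y i <= Y j.
Proof. rewrite leq_eqVlt => /orP [/eqP -> //|ij] jK; exact/ltW/Y_lt. Qed.

Definition wide i j := Y j.+1 - Y j <= X i.+1 - X i.
Definition DH' := DH K.+1 M.+1 wide.
Definition DV' := DV K.+1 M.+1 wide.

Definition V := ('I_K.+1 * 'I_M.+1)%type.
Definition pos (p : V) := (xs p.1, ys p.2).
Lemma posE (p : V) : pos p = (X p.1, Y p.2).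
Proof. by rewrite /pos /X /Y !inord_val. Qed.

Definition eg : rel V := fun p q =>
  [|| [&& (p.2 == q.2 :> nat), (p.1.+1 == q.1 :> nat) & ~~ DH' p.1 p.2],
      [&& (p.2 == q.2 :> nat), (q.1.+1 == p.1 :> nat) & ~~ DH' q.1 q.2],
      [&& (p.1 == q.1 :> nat), (p.2.+1 == q.2 :> nat) & ~~ DV' p.1 p.2] |
      [&& (p.1 == q.1 :> nat), (q.2.+1 == p.2 :> nat) & ~~ DV' q.1 q.2]].

Lemma eg_symI p q : eg p q -> eg q p.
Proof.
rewrite /eg => /or4P [] /and3P [h1 h2 h3]; apply/or4P;
 [apply: Or42 | apply: Or41 | apply: Or44 | apply: Or43]; apply/and3P; split => //; by rewrite eq_sym.
Qed.
Lemma eg_sym : symmetric eg.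
Proof. by move=> p q; apply/idP/idP; apply: eg_symI. Qed.
Lemma eg_irr : irreflexive eg.
Proof. move=> p; rewrite /eg; apply/negP => /or4P [] /and3P [_ /eqP h _]; lia. Qed.


Definition rt (p : V) : V := (inord p.1.+1, p.2).
Definition lf (p : V) : V := (inord p.1.-1, p.2).
Definition up (p : V) : V := (p.1, inord p.2.+1).
Definition dn (p : V) : V := (p.1, inord p.2.-1).

Lemma pairE (p q : V) : (p.1 : nat) = q.1 -> (p.2 : nat) = q.2 -> p = q.
Proof. by case: p q => [a b] [c d] /= h1 h2; congr pair; apply: val_inj. Qed.

Lemma rt1 (p : V) : (p.1 < K)%N -> ((rt p).1 : nat) = p.1.+1.
Proof. by move=> h; rewrite /= inordK. Qed.
Lemma lf1 (p : V) : ((lf p).1 : nat) = p.1.-1.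
Proof. by rewrite /= inordK //; have := ltn_ord p.1; lia. Qed.
Lemma up2 (p : V) : (p.2 < M)%N -> ((up p).2 : nat) = p.2.+1.
Proof. by move=> h; rewrite /= inordK. Qed.
Lemma dn2 (p : V) : ((dn p).2 : nat) = p.2.-1.
Proof. by rewrite /= inordK //; have := ltn_ord p.2; lia. Qed.

Lemma eg_cases (p q : V) : eg p q ->
 [\/ [/\ (p.1 < K)%N, q = rt p & ~~ DH' p.1 p.2],
     [/\ (0 < p.1)%N, q = lf p & ~~ DH' p.1.-1 p.2],
     [/\ (p.2 < M)%N, q = up p & ~~ DV' p.1 p.2] |
     [/\ (0 < p.2)%N, q = dn p & ~~ DV' p.1 p.2.-1]].
Proof.
have := ltn_ord p.1; have := ltn_ord p.2; have := ltn_ord q.1; have := ltn_ord q.2.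
rewrite /eg => q2 q1 p2 p1 /or4P [] /and3P [/eqP h1 /eqP h2 h3].
- apply: Or41; split; [lia | | done].
  by apply: pairE; [rewrite rt1 //; lia | done].
- apply: Or42; split; [lia | | by rewrite -h2 h1 /=].
  by apply: pairE; [rewrite lf1; lia | done].
- apply: Or43; split; [lia | | done].
  by apply: pairE; [done | rewrite up2 //; lia].
- apply: Or44; split; [lia | | by rewrite -h2 h1 /=].
  by apply: pairE; [done | rewrite dn2; lia].
Qed.


Lemma card3 (a b c : V) : (#|[set a; b; c]| <= 3)%N.
Proof.
apply: leq_trans (card_size [:: a; b; c]); apply: subset_leq_card.
by apply/subsetP => x; rewrite !inE -orbA.
Qed.

Lemma deg_sub (v a b c : V) : (forall w, eg v w -> [\/ w = a, w = b | w = c]) ->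
  (#|[set w | eg v w]| <= 3)%N.
Proof.
move=> H; apply: leq_trans (card3 a b c); apply: subset_leq_card.
apply/subsetP => w; rewrite inE => /H; rewrite !inE => [[]] ->; by rewrite eqxx ?orbT.
Qed.

Lemma deg3 : max_degree_le eg 3.
Proof.
move=> v.
have p1 := ltn_ord v.1; have p2 := ltn_ord v.2.
case: (ltnP v.1 K) => h1; last first.
  apply: (deg_sub (a := lf v) (b := up v) (c := dn v)) => w /eg_cases [] [h -> t]; try by [apply: Or31 | apply: Or32 | apply: Or33].
  by rewrite ltnNge h1 in h.
case: (posnP v.1) => h2.
  apply: (deg_sub (a := rt v) (b := up v) (c := dn v)) => w /eg_cases [] [h -> t]; try by [apply: Or31 | apply: Or32 | apply: Or33].
  by rewrite h2 in h.
case: (ltnP v.2 M) => h3; last first.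
  apply: (deg_sub (a := lf v) (b := rt v) (c := dn v)) => w /eg_cases [] [h -> t]; try by [apply: Or31 | apply: Or32 | apply: Or33].
  by rewrite ltnNge h3 in h.
case: (posnP v.2) => h4.
  apply: (deg_sub (a := lf v) (b := rt v) (c := up v)) => w /eg_cases [] [h -> t]; try by [apply: Or31 | apply: Or32 | apply: Or33].
  by rewrite h4 in h.
have := core_cov wide h2 (_ : (v.1.+1 < K.+1)%N) h4 (_ : (v.2.+1 < M.+1)%N).
rewrite -/DH' -/DV' => /(_ h1 h3) /or4P [] d.
- apply: (deg_sub (a := lf v) (b := up v) (c := dn v)) => w /eg_cases [] [h -> t]; try by [apply: Or31 | apply: Or32 | apply: Or33].
  by rewrite d in t.
- apply: (deg_sub (a := rt v) (b := up v) (c := dn v)) => w /eg_cases [] [h -> t]; try by [apply: Or31 | apply: Or32 | apply: Or33].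
  by rewrite d in t.
- apply: (deg_sub (a := lf v) (b := rt v) (c := dn v)) => w /eg_cases [] [h -> t]; try by [apply: Or31 | apply: Or32 | apply: Or33].
  by rewrite d in t.
- apply: (deg_sub (a := lf v) (b := rt v) (c := up v)) => w /eg_cases [] [h -> t]; try by [apply: Or31 | apply: Or32 | apply: Or33].
  by rewrite d in t.
Qed.


Lemma distH (p q : V) : (p.2 : nat) = q.2 -> dist (pos p) (pos q) = `|X p.1 - X q.1|.
Proof. by move=> h; rewrite !posE /dist /= h subrr expr0n /= addr0 sqrtr_sqr. Qed.
Lemma distV (p q : V) : (p.1 : nat) = q.1 -> dist (pos p) (pos q) = `|Y p.2 - Y q.2|.
Proof. by move=> h; rewrite !posE /dist /= h subrr expr0n /= add0r sqrtr_sqr. Qed.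

Lemma pl3 (a b c d : V) : path_length pos a [:: b; c; d] =
  dist (pos a) (pos b) + dist (pos b) (pos c) + dist (pos c) (pos d).
Proof. by rewrite !pl_cons pl_nil addr0 addrA. Qed.
Lemma pl1 (a b : V) : path_length pos a [:: b] = dist (pos a) (pos b).
Proof. by rewrite pl_cons pl_nil addr0. Qed.

Lemma stepR (v : V) : (v.1 < K)%N -> exists s, [/\ path eg v s, last v s = rt v &
   path_length pos v s <= 3 * (X v.1.+1 - X v.1)].
Proof.
move=> h1; have p2 := ltn_ord v.2.
have w0 : 0 <= X v.1.+1 - X v.1 by rewrite subr_ge0; apply: X_le.
case d: (DH' v.1 v.2).
  have := core_hostH (k := K.+1) (m := M.+1) (wide := wide) (i := v.1) (j := v.2) h1 p2 d.
  rewrite -/DH' -/DV' => [[[hm [wd [n1 [n2 n3]]]] | [hm [wd [n1 [n2 n3]]]]]].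
  - exists [:: up v; rt (up v); rt v]; split => //.
    + rewrite /= /eg /= !eqxx /= up2 // rt1 // !eqxx /= n1 n3 /=.
      by rewrite n2 !orbT.
    + rewrite pl3 distV // distH ?up2 // distV ?rt1 ?up2 //.
      rewrite /=.
      have hy : 0 <= Y v.2.+1 - Y v.2 by rewrite subr_ge0; apply: Y_le; lia.
      rewrite (distrC (Y v.2)) (distrC (X v.1)) !ger0_norm //.
      move: wd; rewrite /wide => wd.
      lra.
  - exists [:: dn v; rt (dn v); rt v]; split => //.
    + rewrite /= /eg /= !eqxx /= dn2 prednK // rt1 // !eqxx /= n1 n3 n2 /=.
      by rewrite !orbT.
    + rewrite pl3 distV // distH ?dn2 // distV ?rt1 ?dn2 //=.
      have hy : 0 <= Y v.2 - Y v.2.-1 by rewrite subr_ge0; apply: Y_le; lia.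
      rewrite (distrC (Y v.2.-1)) (distrC (X v.1)) !ger0_norm //.
      move: wd; rewrite /wide prednK // => wd.
      lra.
exists [:: rt v]; split => //.
  by rewrite /= /eg /= !eqxx /= rt1 // eqxx d.
rewrite pl1 distH // rt1 // distrC ger0_norm //.
lra.
Qed.


Lemma stepU (v : V) : (v.2 < M)%N -> exists s, [/\ path eg v s, last v s = up v &
   path_length pos v s <= 3 * (Y v.2.+1 - Y v.2)].
Proof.
move=> h1; have p1 := ltn_ord v.1.
have w0 : 0 <= Y v.2.+1 - Y v.2 by rewrite subr_ge0; apply: Y_le.
case d: (DV' v.1 v.2).
  have := core_hostV (k := K.+1) (m := M.+1) (wide := wide) (i := v.1) (j := v.2) p1 h1 d.
  rewrite -/DH' -/DV' => [[[hm [wd [n1 [n2 n3]]]] | [hm [wd [n1 [n2 n3]]]]]].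
  - exists [:: rt v; up (rt v); up v]; split => //.
    + rewrite /= /eg /= !eqxx /= rt1 // up2 // !eqxx /= n1 n3 n2 /=.
      by rewrite !orbT.
    + rewrite pl3 distH // distV ?rt1 // distH ?up2 //= !inordK //.
      have hx : 0 <= X v.1.+1 - X v.1 by rewrite subr_ge0; apply: X_le; lia.
      rewrite (distrC (X v.1)) (distrC (Y v.2)) !ger0_norm //.
      move: wd; rewrite /wide -ltNge => wd.
      lra.
  - exists [:: lf v; up (lf v); up v]; split => //.
    + rewrite /= /eg /= !eqxx /= lf1 prednK // up2 // !eqxx /= n1 n3 n2 /=.
      by rewrite !orbT.
    + rewrite pl3 distH // distV ?lf1 // distH ?up2 //= !inordK //; try lia.
      have hx : 0 <= X v.1 - X v.1.-1 by rewrite subr_ge0; apply: X_le; lia.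
      rewrite (distrC (Y v.2)) (distrC (X v.1.-1)) !ger0_norm //.
      move: wd; rewrite /wide -ltNge prednK // => wd.
      lra.
exists [:: up v]; split => //.
  by rewrite /= /eg /= !eqxx /= up2 // eqxx d !orbT.
rewrite pl1 distV // up2 // distrC ger0_norm //.
lra.
Qed.


Lemma stepL (v : V) : (0 < v.1)%N -> exists s, [/\ path eg v s, last v s = lf v &
   path_length pos v s <= 3 * (X v.1 - X v.1.-1)].
Proof.
move=> h; have p1 := ltn_ord v.1.
have h' : ((lf v).1 < K)%N by rewrite lf1; lia.
have [s [ps ls Ls]] := stepR h'.
have E : rt (lf v) = v by apply: pairE => //; rewrite rt1 // lf1; lia.
have [s' [ps' ls' Ls']] := path_rev pos eg_sym ps.
rewrite ls E in ps' ls' Ls'.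
exists s'; split => //; rewrite Ls'.
by move: Ls; rewrite lf1 prednK.
Qed.

Lemma stepD (v : V) : (0 < v.2)%N -> exists s, [/\ path eg v s, last v s = dn v &
   path_length pos v s <= 3 * (Y v.2 - Y v.2.-1)].
Proof.
move=> h; have p1 := ltn_ord v.2.
have h' : ((dn v).2 < M)%N by rewrite dn2; lia.
have [s [ps ls Ls]] := stepU h'.
have E : up (dn v) = v by apply: pairE => //; rewrite up2 // dn2; lia.
have [s' [ps' ls' Ls']] := path_rev pos eg_sym ps.
rewrite ls E in ps' ls' Ls'.
exists s'; split => //; rewrite Ls'.
by move: Ls; rewrite dn2 prednK.
Qed.

Definition L1 (u v : V) := `|X u.1 - X v.1| + `|Y u.2 - Y v.2|.

Lemma combine (u w v : V) s1 s2 : path eg u s1 -> last u s1 = w -> path eg w s2 -> last w s2 = v ->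
  exists s, [/\ path eg u s, last u s = v & path_length pos u s = path_length pos u s1 + path_length pos w s2].
Proof.
move=> p1 l1 p2 l2; exists (s1 ++ s2); split.
- by rewrite cat_path p1 l1.
- by rewrite last_cat l1.
- by rewrite pl_cat l1.
Qed.

Lemma absX i j : (i <= j)%N -> (j <= K)%N -> `|X i - X j| = X j - X i.
Proof. by move=> ij jK; rewrite distrC ger0_norm // subr_ge0 X_le. Qed.
Lemma absY i j : (i <= j)%N -> (j <= M)%N -> `|Y i - Y j| = Y j - Y i.
Proof. by move=> ij jK; rewrite distrC ger0_norm // subr_ge0 Y_le. Qed.

Lemma gpath n : forall u v : V, (u.1 - v.1 + (v.1 - u.1) + (u.2 - v.2) + (v.2 - u.2))%N = n ->
  exists s, [/\ path eg u s, last u s = v & path_length pos u s <= 3 * L1 u v].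
Proof.
elim: n => [|n IH] u v hn.
  have -> : v = u by apply: pairE; lia.
  exists [::]; split => //; rewrite pl_nil /L1 !subrr normr0 addr0 mulr0 //.
have pu1 := ltn_ord u.1; have pv1 := ltn_ord v.1; have pu2 := ltn_ord u.2; have pv2 := ltn_ord v.2.
case: (ltngtP u.1 v.1) => c1.
- have h : (u.1 < K)%N by lia.
  have [s1 [ps1 ls1 Ls1]] := stepR h.
  have [s2 [ps2 ls2 Ls2]] := IH (rt u) v (ltac:(rewrite rt1 //=; lia)).
  have [s [ps ls Ls]] := combine ps1 ls1 ps2 ls2.
  exists s; split => //; rewrite Ls.
  move: Ls2; rewrite /L1 rt1 //= absX; try lia.
  rewrite (absX (i := u.1)); try lia.
  move=> Ls2; lra.
- have h : (0 < u.1)%N by lia.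
  have [s1 [ps1 ls1 Ls1]] := stepL h.
  have [s2 [ps2 ls2 Ls2]] := IH (lf u) v (ltac:(rewrite lf1 //=; lia)).
  have [s [ps ls Ls]] := combine ps1 ls1 ps2 ls2.
  exists s; split => //; rewrite Ls.
  move: Ls2; rewrite /L1 lf1 //= (distrC (X u.1.-1)) (absX (i := v.1) (j := u.1.-1)); try lia.
  rewrite (distrC (X u.1)) (absX (i := v.1) (j := u.1)); try lia.
  move=> Ls2; lra.
- case: (ltngtP u.2 v.2) => c2.
  + have h : (u.2 < M)%N by lia.
    have [s1 [ps1 ls1 Ls1]] := stepU h.
    have [s2 [ps2 ls2 Ls2]] := IH (up u) v (ltac:(rewrite up2 //=; lia)).
    have [s [ps ls Ls]] := combine ps1 ls1 ps2 ls2.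
    exists s; split => //; rewrite Ls.
    move: Ls2; rewrite /L1 up2 //= absY; try lia.
    rewrite (absY (i := u.2)); try lia.
    move=> Ls2; lra.
  + have h : (0 < u.2)%N by lia.
    have [s1 [ps1 ls1 Ls1]] := stepD h.
    have [s2 [ps2 ls2 Ls2]] := IH (dn u) v (ltac:(rewrite dn2 //=; lia)).
    have [s [ps ls Ls]] := combine ps1 ls1 ps2 ls2.
    exists s; split => //; rewrite Ls.
    move: Ls2; rewrite /L1 dn2 //= (distrC (Y u.2.-1)) (absY (i := v.2) (j := u.2.-1)); try lia.
    rewrite (distrC (Y u.2)) (absY (i := v.2) (j := u.2)); try lia.
    move=> Ls2; lra.
  + exfalso; lia.
Qed.


Lemma l1_sqrt (a b : R) : `|a| + `|b| <= Num.sqrt 2 * Num.sqrt (a ^+ 2 + b ^+ 2).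
Proof.
rewrite -sqrtrM //.
rewrite -[X in X <= _]ger0_norm ?addr_ge0 // -sqrtr_sqr ler_sqrt; last first.
  by rewrite mulr_ge0 // addr_ge0 // sqr_ge0.
have ha : a ^+ 2 = `|a| ^+ 2 by rewrite real_normK // num_real.
have hb : b ^+ 2 = `|b| ^+ 2 by rewrite real_normK // num_real.
rewrite ha hb.
have := sqr_ge0 (`|a| - `|b|).
rewrite !expr2. nra.
Qed.

Lemma stretch : stretch_factor_le pos eg (3 * Num.sqrt 2).
Proof.
move=> u v.
have [s [ps ls Ls]] := gpath (erefl (u.1 - v.1 + (v.1 - u.1) + (u.2 - v.2) + (v.2 - u.2))%N).
exists s; split => //.
apply: (le_trans Ls).
rewrite -mulrA ler_pM2l // /L1 !posE /dist /=.
exact: l1_sqrt.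
Qed.


Definition hedge (p q : V) := (p.2 : nat) = q.2 /\ (p.1 : nat).+1 = q.1.
Definition vedge (p q : V) := (p.1 : nat) = q.1 /\ (p.2 : nat).+1 = q.2.

Lemma eg_norm (a b : V) : eg a b -> [\/ hedge a b, hedge b a, vedge a b | vedge b a].
Proof.
rewrite /eg => /or4P [] /and3P [/eqP h1 /eqP h2 _].
- by apply: Or41.
- by apply: Or42.
- by apply: Or43.
- by apply: Or44.
Qed.

Lemma on_seg_sym (a b z : R * R) : on_seg a b z -> on_seg b a z.
Proof.
case=> t /andP [t0 t1] ->; exists (1 - t).
  by apply/andP; split; lra.
congr pair; ring.
Qed.

Lemma seg_h (p q : V) z : hedge p q -> on_seg (pos p) (pos q) z ->
  z.2 = Y p.2 /\ X p.1 <= z.1 <= X q.1.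
Proof.
move=> [e2 e1] [t /andP [t0 t1] ->]; rewrite !posE /=.
have d0 : 0 <= X q.1 - X p.1 by rewrite subr_ge0 X_le //; [lia | have := ltn_ord q.1; lia].
rewrite -e2 subrr mulr0 addr0; split => //.
apply/andP; split; nra.
Qed.

Lemma seg_v (p q : V) z : vedge p q -> on_seg (pos p) (pos q) z ->
  z.1 = X p.1 /\ Y p.2 <= z.2 <= Y q.2.
Proof.
move=> [e2 e1] [t /andP [t0 t1] ->]; rewrite !posE /=.
have d0 : 0 <= Y q.2 - Y p.2 by rewrite subr_ge0 Y_le //; [lia | have := ltn_ord q.2; lia].
rewrite -e2 subrr mulr0 addr0; split => //.
apply/andP; split; nra.
Qed.

Lemma X_inj i j : (i <= K)%N -> (j <= K)%N -> X i = X j -> i = j.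
Proof.
move=> iK jK E; case: (ltngtP i j) => // c.
- by have := X_lt c jK; rewrite E ltxx.
- by have := X_lt c iK; rewrite E ltxx.
Qed.
Lemma Y_inj i j : (i <= M)%N -> (j <= M)%N -> Y i = Y j -> i = j.
Proof.
move=> iK jK E; case: (ltngtP i j) => // c.
- by have := Y_lt c jK; rewrite E ltxx.
- by have := Y_lt c iK; rewrite E ltxx.
Qed.

Lemma X_btw i i' : (i.+1 <= K)%N -> (i' <= K)%N -> X i <= X i' -> X i' <= X i.+1 -> i' = i \/ i' = i.+1.
Proof.
move=> iK i'K h1 h2.
case: (ltnP i' i) => c1; first by have := X_lt c1 (ltnW iK); rewrite ltNge h1.
case: (ltnP i.+1 i') => c2; first by have := X_lt c2 i'K; rewrite ltNge h2.
lia.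
Qed.
Lemma Y_btw i i' : (i.+1 <= M)%N -> (i' <= M)%N -> Y i <= Y i' -> Y i' <= Y i.+1 -> i' = i \/ i' = i.+1.
Proof.
move=> iK i'K h1 h2.
case: (ltnP i' i) => c1; first by have := Y_lt c1 (ltnW iK); rewrite ltNge h1.
case: (ltnP i.+1 i') => c2; first by have := Y_lt c2 i'K; rewrite ltNge h2.
lia.
Qed.

Lemma zpos (z : R * R) (p : V) : z.1 = X p.1 -> z.2 = Y p.2 -> z = pos p.
Proof. by case: z => a b /= -> ->; rewrite posE. Qed.


Lemma in2I (w p q r s : V) : (w == p) || (w == q) -> (w == r) || (w == s) -> w \in [set p; q] :&: [set r; s].
Proof. by move=> h1 h2; rewrite !inE h1 h2. Qed.

Lemma plane_HH (p q r s : V) z : hedge p q -> hedge r s -> [set p; q] != [set r; s] ->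
  on_seg (pos p) (pos q) z -> on_seg (pos r) (pos s) z ->
  exists2 w, w \in [set p; q] :&: [set r; s] & z = pos w.
Proof.
move=> hpq hrs ne o1 o2.
have [z2 /andP [a1 a2]] := seg_h hpq o1; have [z2' /andP [b1 b2]] := seg_h hrs o2.
move: hpq hrs => [e1 e2] [f1 f2].
have := ltn_ord p.1; have := ltn_ord q.1; have := ltn_ord r.1; have := ltn_ord s.1.
have := ltn_ord p.2; have := ltn_ord q.2; have := ltn_ord r.2; have := ltn_ord s.2.
move=> s2 r2 q2 p2 s1 r1 q1 p1.
have jj : (p.2 : nat) = r.2 by apply: Y_inj; [lia | lia | rewrite -z2 -z2'].
case: (ltngtP p.1 r.1) => c.
- have c2 : (r.1 : nat) = q.1.
    case: (ltnP q.1 r.1) => c3; last by lia.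
    have := X_lt c3 (ltac:(lia)); rewrite ltNge => /negP; case.
    exact: le_trans b1 a2.
  have qr : q = r by apply: pairE; lia.
  exists q; first by apply: in2I; [rewrite eqxx orbT | rewrite qr eqxx].
  apply: zpos; last by rewrite z2 -e1.
  by apply/eqP; rewrite eq_le a2 /= -c2 b1.
- have c2 : (p.1 : nat) = s.1.
    case: (ltnP s.1 p.1) => c3; last by lia.
    have := X_lt c3 (ltac:(lia)); rewrite ltNge => /negP; case.
    exact: le_trans a1 b2.
  have ps : p = s by apply: pairE; lia.
  exists p; first by apply: in2I; [rewrite eqxx | rewrite ps eqxx orbT].
  apply: zpos; last by rewrite z2.
  by apply/eqP; rewrite eq_le a1 andbT c2 b2.
- exfalso; move/negP: ne; apply.
  have pr : p = r by apply: pairE; lia.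
  have qs : q = s by apply: pairE; lia.
  by rewrite pr qs.
Qed.


Lemma plane_VV (p q r s : V) z : vedge p q -> vedge r s -> [set p; q] != [set r; s] ->
  on_seg (pos p) (pos q) z -> on_seg (pos r) (pos s) z ->
  exists2 w, w \in [set p; q] :&: [set r; s] & z = pos w.
Proof.
move=> hpq hrs ne o1 o2.
have [z2 /andP [a1 a2]] := seg_v hpq o1; have [z2' /andP [b1 b2]] := seg_v hrs o2.
move: hpq hrs => [e1 e2] [f1 f2].
have := ltn_ord p.1; have := ltn_ord q.1; have := ltn_ord r.1; have := ltn_ord s.1.
have := ltn_ord p.2; have := ltn_ord q.2; have := ltn_ord r.2; have := ltn_ord s.2.
move=> s2 r2 q2 p2 s1 r1 q1 p1.
have jj : (p.1 : nat) = r.1 by apply: X_inj; [lia | lia | rewrite -z2 -z2'].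
case: (ltngtP p.2 r.2) => c.
- have c2 : (r.2 : nat) = q.2.
    case: (ltnP q.2 r.2) => c3; last by lia.
    have := Y_lt c3 (ltac:(lia)); rewrite ltNge => /negP; case.
    exact: le_trans b1 a2.
  have qr : q = r by apply: pairE; lia.
  exists q; first by apply: in2I; [rewrite eqxx orbT | rewrite qr eqxx].
  apply: zpos; first by rewrite z2 -e1.
  by apply/eqP; rewrite eq_le a2 /= -c2 b1.
- have c2 : (p.2 : nat) = s.2.
    case: (ltnP s.2 p.2) => c3; last by lia.
    have := Y_lt c3 (ltac:(lia)); rewrite ltNge => /negP; case.
    exact: le_trans a1 b2.
  have ps : p = s by apply: pairE; lia.
  exists p; first by apply: in2I; [rewrite eqxx | rewrite ps eqxx orbT].
  apply: zpos; first by rewrite z2.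
  by apply/eqP; rewrite eq_le a1 andbT c2 b2.
- exfalso; move/negP: ne; apply.
  have pr : p = r by apply: pairE; lia.
  have qs : q = s by apply: pairE; lia.
  by rewrite pr qs.
Qed.

Lemma plane_HV (p q r s : V) z : hedge p q -> vedge r s ->
  on_seg (pos p) (pos q) z -> on_seg (pos r) (pos s) z ->
  exists2 w, w \in [set p; q] :&: [set r; s] & z = pos w.
Proof.
move=> hpq hrs o1 o2.
have [z2 /andP [a1 a2]] := seg_h hpq o1; have [z1 /andP [b1 b2]] := seg_v hrs o2.
move: hpq hrs => [e1 e2] [f1 f2].
have := ltn_ord p.1; have := ltn_ord q.1; have := ltn_ord r.1; have := ltn_ord s.1.
have := ltn_ord p.2; have := ltn_ord q.2; have := ltn_ord r.2; have := ltn_ord s.2.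
move=> s2 r2 q2 p2 s1 r1 q1 p1.
rewrite z1 -e2 in a1 a2; rewrite z2 -f2 in b1 b2.
have [cx|cx] : (r.1 : nat) = p.1 \/ (r.1 : nat) = p.1.+1 by apply: X_btw => //; lia.
all: have [cy|cy] : (p.2 : nat) = r.2 \/ (p.2 : nat) = r.2.+1 by apply: Y_btw => //; lia.
- have pr : p = r by apply: pairE; lia.
  exists p; first by apply: in2I; [rewrite eqxx | rewrite pr eqxx].
  by apply: zpos; rewrite ?z1 ?z2 ?cx ?pr.
- have ps : p = s by apply: pairE; lia.
  exists p; first by apply: in2I; [rewrite eqxx | rewrite ps eqxx orbT].
  by apply: zpos; rewrite ?z1 ?z2 ?cx ?ps.
- have qr : q = r by apply: pairE; lia.
  exists q; first by apply: in2I; [rewrite eqxx orbT | rewrite qr eqxx].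
  apply: zpos; first by rewrite z1 -qr.
  by rewrite z2 e1.
- have qs : q = s by apply: pairE; lia.
  exists q; first by apply: in2I; [rewrite eqxx orbT | rewrite qs eqxx orbT].
  apply: zpos; first by rewrite z1 f1 -qs.
  by rewrite z2 e1.
Qed.


Lemma plane_n (p q r s : V) z : (hedge p q \/ vedge p q) -> (hedge r s \/ vedge r s) ->
  [set p; q] != [set r; s] ->
  on_seg (pos p) (pos q) z -> on_seg (pos r) (pos s) z ->
  exists2 w, w \in [set p; q] :&: [set r; s] & z = pos w.
Proof.
move=> [h1|h1] [h2|h2] ne o1 o2.
- exact: plane_HH h1 h2 ne o1 o2.
- exact: plane_HV h1 h2 o1 o2.
- have [w w1 w2] := plane_HV h2 h1 o2 o1; exists w => //; by rewrite setIC.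
- exact: plane_VV h1 h2 ne o1 o2.
Qed.

Lemma norm_edge (a b : V) z : eg a b -> on_seg (pos a) (pos b) z ->
  exists p q, [/\ hedge p q \/ vedge p q, [set a; b] = [set p; q] & on_seg (pos p) (pos q) z].
Proof.
move=> eab o; case: (eg_norm eab) => h.
- by exists a, b; split => //; left.
- by exists b, a; split; [left | rewrite setUC | exact: on_seg_sym].
- by exists a, b; split => //; right.
- by exists b, a; split; [right | rewrite setUC | exact: on_seg_sym].
Qed.

Lemma plane_ok : plane pos eg.
Proof.
move=> a b c d eab ecd ne z o1 o2.
have [p [q [h1 E1 o1']]] := norm_edge eab o1.
have [r [s [h2 E2 o2']]] := norm_edge ecd o2.
rewrite E1 E2 in ne *.
exact: plane_n h1 h2 ne o1' o2'.
Qed.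

End Grid.

Unset Implicit Arguments.
Local Open Scope ring_scope.

Theorem theorem7 (R : realType) (k m : nat)
    (xs : 'I_k -> R) (ys : 'I_m -> R)
    (hxs : forall i j : 'I_k, (i < j)%N -> xs i < xs j)
    (hys : forall i j : 'I_m, (i < j)%N -> ys i < ys j) :
  exists e : rel ('I_k * 'I_m),
    let pos := fun p : 'I_k * 'I_m => (xs p.1, ys p.2) in
    [/\ simple_graph e, max_degree_le e 3, plane pos e &
        stretch_factor_le pos e (3 * Num.sqrt 2)].
Proof.
case: k xs hxs => [|K] xs hxs.
  exists (fun _ _ => false); split => //.
  - by move=> v; rewrite (_ : [set w | false] = set0) ?cards0 //; apply/setP => w; rewrite !inE.
  - by move=> [[]].
case: m ys hys => [|M] ys hys.
  exists (fun _ _ => false); split => //.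
  - by move=> v; rewrite (_ : [set w | false] = set0) ?cards0 //; apply/setP => w; rewrite !inE.
  - by move=> [? []].
exists (eg xs ys); split.
- split; [exact: eg_sym | exact: eg_irr].
- exact: deg3.
- exact: plane_ok.
- exact: stretch.
Qed.
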